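(* Let $p_0$ be a uniformly continuous density on $\mathbb{R}$, and let $z_{\min} := \inf\{z:p_0(z)>0\}$ and $z_{\max} := \sup\{z:p_0(z)>0\}$. Then (a) $\lim_{z\to-\infty}\psi_0^*(z)<\infty$ if and only if $\limsup_{z\searrow z_{\min}}h_0(z)<\infty$, in which case $z_{\min} = -\infty$; (b) $\lim_{z\to\infty}\psi_0^*(z)>-\infty$ if and only if $\limsup_{z\nearrow z_{\max}}h_0(z)<\infty$, in which case $z_{\max} = \infty$.
   Context: Convention $0/0:=0$. $F_0$ is the distribution function of $p_0$, $F_0^{-1}(u) := \inf\{z\in[-\infty,\infty]:F_0(z)\ge u\}$, $J_0 := p_0\circ F_0^{-1}$ on $[0,1]$, $\hat J_0$ its least concave majorant on $[0,1]$, and $\psi_0^* := \hat J_0^{(\mathrm{R})}\circ F_0\colon\mathbb{R}\to[-\infty,\infty]$ (right derivative; value at $1$ defined as the left limit). The two-sided hazard function is $h_0(z) := p_0(z)/\bigl(F_0(z)\wedge(1 - F_0(z))\bigr)$, so that $h_0(z) = 0$ whenever $F_0(z)\in\{0,1\}$. *)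

(* Defs.v *)
From HB Require Import structures.
From mathcomp Require Import all_boot all_order all_algebra.
From mathcomp Require Import all_classical all_reals all_analysis.
Set Implicit Arguments. Unset Strict Implicit. Unset Printing Implicit Defensive.
Import Order.TTheory GRing.Theory Num.Theory.
Import numFieldNormedType.Exports.
Local Open Scope classical_set_scope.
Local Open Scope ring_scope.

Section Defs.
Variable R : realType.
Local Notation mu := (@lebesgue_measure R).

Definition is_density (p : R -> R) : Prop :=
  (forall x, 0 <= p x) /\ measurable_fun setT p /\
  (\int[mu]_x (p x)%:E = 1)%E.

Definition unif_cont (p : R -> R) : Prop :=
  forall e : R, 0 < e -> exists2 d : R, 0 < d &
    forall x y : R, `|x - y| < d -> `|p x - p y| < e.

Definition distF (p : R -> R) (z : R) : R :=
  fine (\int[mu]_(x in [set x | (x <= z)%R]) (p x)%:E)%E.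

Definition distF_ext (p : R -> R) (z : \bar R) : R :=
  match z with
  | r%:E => distF p r
  | -oo%E => 0
  | +oo%E => 1
  end.

Definition dens_ext (p : R -> R) (z : \bar R) : R :=
  match z with
  | r%:E => p r
  | _ => 0
  end.

Definition quantile (p : R -> R) (u : R) : \bar R :=
  ereal_inf [set z : \bar R | u <= distF_ext p z].

Definition J0 (p : R -> R) (u : R) : R := dens_ext p (quantile p u).

Definition concave_on01 (g : R -> R) : Prop :=
  forall x y t : R, 0 <= x <= 1 -> 0 <= y <= 1 -> 0 <= t <= 1 ->
    t * g x + (1 - t) * g y <= g (t * x + (1 - t) * y).

(* least concave majorant of J on [0,1]: pointwise infimum of all concave
   majorants of J on [0,1] *)
Definition lcm01 (J : R -> R) (u : R) : \bar R :=
  ereal_inf [set (g u)%:E | g in [set g : R -> R | concave_on01 g /\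
                          forall v, 0 <= v <= 1 -> J v <= g v]].

Definition rderiv (g : R -> R) (u : R) : \bar R :=
  lim (((g (u + h) - g u) / h)%:E @[h --> 0^'+]).

Definition rderiv01 (g : R -> R) (u : R) : \bar R :=
  if u < 1 then rderiv g u else lim (rderiv g v @[v --> 1^'-]).

Definition Jhat (p : R -> R) (u : R) : R := fine (lcm01 (J0 p) u).

Definition psi_star (p : R -> R) (z : R) : \bar R :=
  rderiv01 (Jhat p) (distF p z).

(* two-sided hazard function; x / 0 = 0 in MathComp, matching 0/0 := 0 *)
Definition hazard (p : R -> R) (z : R) : R :=
  p z / Num.min (distF p z) (1 - distF p z).

Definition zmin (p : R -> R) : \bar R := ereal_inf [set z%:E | z in [set z | 0 < p z]].
Definition zmax (p : R -> R) : \bar R := ereal_sup [set z%:E | z in [set z | 0 < p z]].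

Definition from_right (a : \bar R) : set_system R :=
  match a with
  | r%:E => r^'+
  | -oo%E => -oo
  | +oo%E => +oo
  end.
Definition from_left (a : \bar R) : set_system R :=
  match a with
  | r%:E => r^'-
  | -oo%E => -oo
  | +oo%E => +oo
  end.

End Defs.

(* Main.v *)
Require Import Defs.
From HB Require Import structures.
From mathcomp Require Import all_boot all_order all_algebra.
From mathcomp Require Import all_classical all_reals all_analysis.
From mathcomp Require Import measurable_realfun.
From mathcomp Require Import ring lra.
Import Order.TTheory GRing.Theory Num.Theory.
Import numFieldNormedType.Exports.
Local Open Scope classical_set_scope.
Local Open Scope ring_scope.
Set Implicit Arguments. Unset Strict Implicit. Unset Printing Implicit Defensive.

Lemma esup_lt {R : realType} (f : R -> R) (F : set_system R) :
  (limf_esup (fun z => (f z)%:E) F < +oo)%E <->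
  exists V, F V /\ exists C, 0 <= C /\ forall x, V x -> f x <= C.
Proof.
split.
- move=> /ereal_inf_lt[_ [V FV <-]] hV; exists V; split => //.
  move: hV; case E: (ereal_sup _) => [r| |] // _.
  + exists (Num.max r 0); split; first by rewrite le_max lexx orbT.
    move=> x Vx; have : ((f x)%:E <= ereal_sup ((fun z => (f z)%:E) @` V))%E.
      by apply: ereal_sup_ubound; exists x.
    by rewrite E lee_fin => h; rewrite le_max h.
  + exists 0; split => // x Vx.
    have : ((f x)%:E <= ereal_sup ((fun z => (f z)%:E) @` V))%E.
      by apply: ereal_sup_ubound; exists x.
    by rewrite E.
- move=> [V [FV [C [C0 HC]]]].
  apply: (@le_lt_trans _ _ (ereal_sup ((fun z => (f z)%:E) @` V))).
    by apply: ereal_inf_lbound; exists V.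
  apply: (@le_lt_trans _ _ C%:E); last exact: ltry.
  by apply: ge_ereal_sup => _ [x Vx <-]; rewrite lee_fin HC.
Qed.

Lemma at_right_ex {R : realType} (r : R) V : r^'+ V ->
  exists2 e, 0 < e & forall y, r < y < r + e -> V y.
Proof.
case=> e /= e0 He; exists e => // y /andP[ry yre]; apply: He => //=.
rewrite distrC ger0_norm; lra.
Qed.

Lemma at_left_ex {R : realType} (r : R) V : r^'- V ->
  exists2 e, 0 < e & forall y, r - e < y < r -> V y.
Proof.
case=> e /= e0 He; exists e => // y /andP[ry yre]; apply: He => //=.
rewrite ger0_norm; lra.
Qed.

Lemma ninfty_ex {R : realType} (V : set R) : (-oo%R : set_system R) V ->
  exists z, forall y, y < z -> V y.
Proof. by case=> M [_ HM]; exists M. Qed.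

Lemma pinfty_ex {R : realType} (V : set R) : (+oo%R : set_system R) V ->
  exists z, forall y, z < y -> V y.
Proof. by case=> M [_ HM]; exists M. Qed.

Lemma d_choice {R : realType} (e K : R) : 0 < e -> 0 < K ->
  exists d, [/\ 0 < d, d <= e & K * d <= 1 / 2].
Proof.
move=> e0 K0; case: (leP e (1 / (2 * K))) => h.
  exists e; split => //.
  have e1 : K * (1 / (2 * K)) = 1 / 2 by field; rewrite gt_eqF.
  by rewrite -e1; apply: ler_wpM2l => //; exact: ltW.
exists (1 / (2 * K)); split => //; first by apply: divr_gt0 => //; lra.
- exact: ltW.
- by rewrite le_eqVlt; apply/orP; left; apply/eqP; field; rewrite gt_eqF.
Qed.

Lemma mul_le_half {R : realType} (a b c : R) : 0 <= a -> b <= c -> a * c <= 1 / 2 -> a * b <= 1 / 2.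
Proof. by move=> a0 bc h; apply: le_trans h; apply: ler_wpM2l. Qed.

Lemma Kd_le {R : realType} (a K d : R) : 0 <= d -> a <= K -> K * d <= 1 / 2 -> a * d <= 1 / 2.
Proof. by move=> d0 aK h; apply: le_trans h; apply: ler_wpM2r. Qed.

Section A.
Definition Sle {R : realType} (a : R) := [set x : R | x <= a].
Definition Sgt {R : realType} (a : R) := [set x : R | a < x].
Definition Soc {R : realType} (a b : R) := [set x : R | a < x <= b].
Variable R : realType.
Local Notation mu := (@lebesgue_measure R).
Variable p : R -> R.
Hypothesis p_ge0 : forall x, 0 <= p x.
Hypothesis p_meas : measurable_fun setT p.
Hypothesis p_int : (\int[mu]_x (p x)%:E = 1)%E.

Local Notation P := (fun x => (p x)%:E).

Lemma mP : measurable_fun (setT : set R) (EFin \o p).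
Proof. exact/measurable_EFinP. Qed.

Lemma mPD (D : set R) : measurable D -> measurable_fun D (EFin \o p).
Proof. move=> mD; exact: measurable_funS mP. Qed.

Definition I (A : set R) := (\int[mu]_(x in A) P x)%E.

Lemma I_ge0 A : (0 <= I A)%E.
Proof. by apply: integral_ge0 => x _; rewrite lee_fin. Qed.

Lemma I_le1 A : measurable A -> (I A <= 1)%E.
Proof.
move=> mA; rewrite -p_int; apply: ge0_subset_integral => //.
- exact: mP.
- by move=> x _; rewrite lee_fin.
Qed.

Lemma I_fin A : measurable A -> I A \is a fin_num.
Proof.
move=> mA; rewrite ge0_fin_numE ?I_ge0//.
by rewrite (le_lt_trans (@I_le1 A mA)) // ltry.
Qed.

Lemma mleft (a : R) : measurable (Sle a).
Proof.
rewrite (_ : Sle a = [set` `]-oo, a]]); first exact: measurable_itv.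
by apply/seteqP; split => x /=; rewrite in_itv.
Qed.

Lemma mright (a : R) : measurable (Sgt a).
Proof.
rewrite (_ : Sgt a = [set` `]a, +oo[]); first exact: measurable_itv.
by apply/seteqP; split => x /=; rewrite in_itv /= andbT.
Qed.

Lemma moc (a b : R) : measurable (Soc a b).
Proof.
rewrite (_ : Soc a b = [set` `]a, b]]); first exact: measurable_itv.
by apply/seteqP; split => x /=; rewrite in_itv.
Qed.

Lemma FE z : (distF p z)%:E = I (Sle z).
Proof. by rewrite /distF fineK //; apply: I_fin; apply: mleft. Qed.

Lemma F_ge0 z : 0 <= distF p z.
Proof. by rewrite -lee_fin FE I_ge0. Qed.

Lemma F_le1 z : distF p z <= 1.
Proof. by rewrite -lee_fin FE; apply: I_le1; exact: mleft. Qed.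

Lemma Fsplit a b : a <= b ->
  (distF p b)%:E = ((distF p a)%:E + I (Soc a b))%E.
Proof.
move=> ab; rewrite !FE /I -ge0_integral_setU //.
- congr (integral _ _ _); apply/seteqP; split => x; rewrite /Sle /Soc /=.
    by move=> xb; case: (leP x a) => xa; [left|right].

  by case=> [xa|/andP[_ //]]; exact: le_trans xa ab.
- exact: mleft.
- exact: moc.
- apply: mPD; apply: measurableU; [exact: mleft|exact: moc].
- by move=> x _; rewrite lee_fin.
- rewrite disj_set2E; apply/eqP/seteqP; split => x //; rewrite /Sle /Soc /= => -[xa /andP[ax _]].
  by move: (lt_le_trans ax xa); rewrite ltxx.
Qed.

Lemma Fle a b : a <= b -> distF p a <= distF p b.
Proof.
move=> ab; rewrite -lee_fin (Fsplit ab); apply: leeDl; exact: I_ge0.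
Qed.

Lemma Ioc_ub a b K : a <= b -> (forall x, a < x <= b -> p x <= K) ->
  (I (Soc a b) <= (K * (b - a))%:E)%E.
Proof.
move=> ab pK; have [->|ab'] := eqVneq a b.
  rewrite subrr mulr0 /I (_ : Soc b b = set0) ?integral_set0 //.
  by apply/seteqP; split => x //= /andP[bx xb]; move: (lt_le_trans bx xb); rewrite ltxx.
have ltab : a < b by rewrite lt_neqAle ab' ab.
apply: (@le_trans _ _ (\int[mu]_(x in Soc a b) (cst K%:E) x))%E.
  apply: ge0_le_integral => //; try exact: moc; try exact: mPD (moc a b);
    move=> x xab; rewrite /= ?lee_fin ?p_ge0 //; exact: pK.
rewrite integral_cst; last exact: moc.
rewrite (_ : Soc a b = [set` `]a, b]]); last first.
  by apply/seteqP; split => x /=; rewrite in_itv.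
have := @lebesgue_measure_itv R `]a, b]; rewrite /= lte_fin ltab => ->.
by rewrite -EFinD -EFinM.
Qed.

Lemma Ioc_lb a b k : 0 <= k -> a <= b -> (forall x, a < x <= b -> k <= p x) ->
  ((k * (b - a))%:E <= I (Soc a b))%E.
Proof.
move=> k0 ab pK; have [->|ab'] := eqVneq a b.
  by rewrite subrr mulr0 I_ge0.
have ltab : a < b by rewrite lt_neqAle ab' ab.
apply: (@le_trans _ _ (\int[mu]_(x in Soc a b) (cst k%:E) x))%E; last first.
  apply: ge0_le_integral => //; try exact: moc; try exact: mPD (moc a b);
    move=> x xab; rewrite /= ?lee_fin ?p_ge0 //; exact: pK.
rewrite integral_cst; last exact: moc.
rewrite (_ : Soc a b = [set` `]a, b]]); last first.
  by apply/seteqP; split => x /=; rewrite in_itv.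
have := @lebesgue_measure_itv R `]a, b]; rewrite /= lte_fin ltab => ->.
by rewrite -EFinD -EFinM.
Qed.

Lemma Fdiff a b : a <= b -> I (Soc a b) = (distF p b - distF p a)%:E.
Proof.
move=> ab; have f := I_fin (moc a b); move: (Fsplit ab).
rewrite -(fineK f) -EFinD; case=> ->.
by rewrite (addrC (distF p a)) addrK.
Qed.

Lemma Fub a b K : a <= b -> (forall x, a < x <= b -> p x <= K) ->
  distF p b - distF p a <= K * (b - a).
Proof. by move=> ab pK; rewrite -lee_fin -Fdiff //; exact: Ioc_ub. Qed.

Lemma Flb a b k : 0 <= k -> a <= b -> (forall x, a < x <= b -> k <= p x) ->
  k * (b - a) <= distF p b - distF p a.
Proof. by move=> k0 ab pK; rewrite -lee_fin -Fdiff //; exact: Ioc_lb. Qed.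

Hypothesis p_uc : unif_cont p.

Lemma uc_near e : 0 < e -> exists2 d, 0 < d &
  forall x y, `|x - y| < d -> p x - e < p y /\ p y < p x + e.
Proof.
move=> e0; have [d d0 H] := p_uc e0; exists d => // x y xy.
have := H _ _ xy; rewrite ltr_distl => /andP[h1 h2]; split; lra.
Qed.

Lemma p_bounded : exists2 M, 0 < M & forall x, p x <= M.
Proof.
have [d d0 H] := uc_near ltr01.
exists (1 + 4 / d); first by rewrite ltr_wpDr // ?divr_ge0 // ltW.
move=> x; rewrite leNgt; apply/negP => hx.
have := @Flb (x - d / 2) x (4 / d) _ _ _.
have : distF p x - distF p (x - d / 2) <= 1.
  have := F_le1 x; have := F_ge0 (x - d / 2); lra.
move=> h1 h2; have : 4 / d * (x - (x - d / 2)) = 2.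
  by field; rewrite gt_eqF.
move=> h3; suff : 2 <= 1 :> R by rewrite leNgt ltr1n.
apply: le_trans h1; rewrite -[X in X <= _]h3; apply: h2.
- by rewrite divr_ge0 // ltW.
- by rewrite lerBlDr lerDl divr_ge0 // ltW.
- move=> y /andP[y1 y2]; have : `|x - y| < d.
    rewrite ger0_norm ?subr_ge0 //; lra.
  by move/H => [+ _]; lra.
Qed.

Lemma Mbound : exists M, [/\ 0 < M, forall x, p x <= M &
  forall a b, a <= b -> distF p b - distF p a <= M * (b - a)].
Proof.
have [M M0 pM] := p_bounded; exists M; split => // a b ab.
by apply: Fub => // x _; exact: pM.
Qed.

Lemma pos_near x : 0 < p x -> exists2 d, 0 < d &
  forall y, `|x - y| < d -> p x / 2 < p y.
Proof.
move=> px; have [d d0 H] := uc_near (divr_gt0 px (ltr0Sn _ 1)).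
by exists d => // y /H [h _]; lra.
Qed.

Lemma Fsinc_l x y : 0 < p x -> y < x -> distF p y < distF p x.
Proof.
move=> px yx; have [d d0 H] := pos_near px.
have [a [ya ax xad]] : exists a, [/\ y <= a, a < x & x - a < d].
  case: (leP y (x - d / 2)) => h.
    by exists (x - d / 2); split => //; lra.
  by exists y; split => //; lra.
have h3 : p x / 2 * (x - a) <= distF p x - distF p a.
  apply: Flb; [lra | exact: ltW | move=> z /andP[az zx]; apply/ltW/H].
  rewrite ger0_norm; lra.
have := Fle ya.
have : 0 < p x / 2 * (x - a) by apply: mulr_gt0; lra.
lra.
Qed.

Lemma Fsinc_r x y : 0 < p x -> x < y -> distF p x < distF p y.
Proof.
move=> px xy; have [d d0 H] := pos_near px.
have [b [yb xb bxd]] : exists b, [/\ b <= y, x < b & b - x < d].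
  case: (leP y (x + d / 2)) => h.
    by exists y; split => //; lra.
  by exists (x + d / 2); split => //; lra.
have h3 : p x / 2 * (b - x) <= distF p b - distF p x.
  apply: Flb; [lra | exact: ltW | move=> z /andP[xz zb]; apply/ltW/H].
  rewrite distrC ger0_norm; lra.
have := Fle yb.
have : 0 < p x / 2 * (b - x) by apply: mulr_gt0; lra.
lra.
Qed.

Lemma F_pos x : 0 < p x -> 0 < distF p x.
Proof. move=> px; have := @Fsinc_l x (x - 1) px; have := F_ge0 (x - 1). lra. Qed.

Lemma F_lt1 x : 0 < p x -> distF p x < 1.
Proof. move=> px; have := @Fsinc_r x (x + 1) px; have := F_le1 (x + 1). lra. Qed.

Lemma small e : 0 < e -> exists2 dl, 0 < dl &
  (forall z, distF p z < dl -> p z <= e) /\ (forall z, 1 - dl < distF p z -> p z <= e).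
Proof.
move=> e0; have [d d0 H] := uc_near (divr_gt0 e0 (ltr0Sn _ 1)).
exists (e * d / 4); first by apply: divr_gt0; [apply: mulr_gt0|].
have key : e / 2 * (d / 2) = e * d / 4 by field.
split => z; apply: contraTT; rewrite -!ltNge => hz.
- have h3 : e / 2 * (z - (z - d / 2)) <= distF p z - distF p (z - d / 2).
    apply: Flb; [lra | lra | move=> y /andP[y1 y2]].
    have : `|z - y| < d by rewrite ger0_norm; lra.
    by move/H => [+ _]; lra.
  have := F_ge0 (z - d / 2); rewrite -key; lra.
- have h3 : e / 2 * ((z + d / 2) - z) <= distF p (z + d / 2) - distF p z.
    apply: Flb; [lra | lra | move=> y /andP[y1 y2]].
    have : `|z - y| < d by rewrite distrC ger0_norm; lra.
    by move/H => [+ _]; lra.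
  have := F_le1 (z + d / 2); rewrite -key; lra.
Qed.

Lemma mct (A : nat -> set R) : (forall n, measurable (A n)) ->
  (forall n m, (n <= m)%N -> A n `<=` A m) -> (forall x, exists n, A n x) ->
  (I (A n) @[n --> \oo] --> 1)%E.
Proof.
move=> mA ndA cov.
have E1 n : I (A n) = (\int[mu]_x ((EFin \o p) \_ (A n)) x)%E.
  by rewrite /I integral_mkcond.
rewrite (_ : (fun n => I (A n)) = (fun n => \int[mu]_x ((EFin \o p) \_ (A n)) x)%E); last first.
  by apply/funext => n; rewrite E1.
rewrite -p_int.
have E2 x : (p x)%:E = limn (fun n => ((EFin \o p) \_ (A n)) x).
  symmetry; apply: lim_near_cst => //.
  have [N hN] := cov x; exists N => // n /= Nn; rewrite patchE mem_set //.
  exact: ndA hN.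
rewrite (_ : (\int[mu]_x (p x)%:E)%E = (\int[mu]_x limn (fun n => ((EFin \o p) \_ (A n)) x))%E); last first.
  by apply: eq_integral => x _; rewrite -E2.
apply: cvg_monotone_convergence => //.
- by move=> n; apply/(measurable_restrictT (EFin \o p) (mA n)); exact: mPD.
- by move=> n x _; rewrite patchE; case: ifP => // _; rewrite lee_fin.
- move=> x _ m n mn; rewrite !patchE; case: ifP => [/set_mem xm|_].
    by rewrite mem_set //; exact: ndA xm.
  by case: ifP => // _; rewrite lee_fin.
Qed.

Lemma cover_nat (x : R) : exists n : nat, `|x| < n%:R.
Proof. by exists (Num.bound `|x|); apply: archi_boundP. Qed.

Lemma tail_hi e : 0 < e -> exists z, 1 - e < distF p z.
Proof.
move=> e0.
have H : (I (Sle n%:R) @[n --> \oo] --> 1)%E.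
  apply: mct.
  - move=> n; exact: mleft.
  - by move=> n m nm x; rewrite /Sle /= => xn; apply: le_trans xn _; rewrite ler_nat.
  - move=> x; have [n hn] := cover_nat x; exists n; rewrite /Sle /=.
    exact: le_trans (ler_norm x) (ltW hn).
have /fine_cvgP[_ H2] := H.
have : 1 - e < 1 by lra.
move=> /(cvgr_gt 1 H2) [N _ hN].
by exists N%:R; exact: (hN N (leqnn N)).
Qed.

Lemma Fcompl a : ((distF p a)%:E + I (Sgt a))%E = 1%E.
Proof.
rewrite FE /I -ge0_integral_setU //.
- rewrite -p_int; congr (integral _ _ _); apply/seteqP; split => x // _.
  by rewrite /Sle /Sgt /=; case: (leP x a) => h; [left|right].
- exact: mleft.
- exact: mright.
- apply: mPD; apply: measurableU; [exact: mleft|exact: mright].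
- by move=> x _; rewrite lee_fin.
- rewrite disj_set2E; apply/eqP/seteqP; split => x //; rewrite /Sle /Sgt /= => -[xa ax].
  by move: (lt_le_trans ax xa); rewrite ltxx.
Qed.

Lemma tail_lo e : 0 < e -> exists z, distF p z < e.
Proof.
move=> e0.
have H : (I (Sgt (- n%:R)) @[n --> \oo] --> 1)%E.
  apply: mct.
  - move=> n; exact: mright.
  - move=> n m nm x; rewrite /Sgt /= => xn; apply: le_lt_trans _ xn.
    by rewrite lerN2 ler_nat.
  - move=> x; have [n hn] := cover_nat x; exists n; rewrite /Sgt /=.
    rewrite ltrNl; apply: le_lt_trans _ hn; rewrite -normrN; exact: ler_norm.
have /fine_cvgP[_ H2] := H.
have : 1 - e < 1 by lra.
move=> /(cvgr_gt 1 H2) [N _ hN].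
exists (- N%:R); have := hN N (leqnn N); have := Fcompl (- N%:R).
rewrite -(fineK (I_fin (mright (- N%:R)))) -EFinD; case => h /=; lra.
Qed.

Lemma Q1 u z : quantile p u = z%:E -> distF p z = u.
Proof.
move=> qz; have [M [M0 pM Flip]] := Mbound.
have lb t : t < z -> distF p t < u.
  move=> tz; rewrite ltNge; apply/negP => ut.
  have : (quantile p u <= t%:E)%E by apply: ereal_inf_lbound.
  by rewrite qz lee_fin leNgt tz.
have ex e : 0 < e -> exists t, t < z + e /\ u <= distF p t.
  move=> e0; have : (quantile p u < (z + e)%:E)%E by rewrite qz lte_fin ltrDl.
  move=> /ereal_inf_lt[y Sy yz]; case: y Sy yz => [t| |] /= Sy yz.
  - by exists t; split => //; rewrite -lte_fin.
  - by move: yz; rewrite ltNge leey.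
  - have : (quantile p u <= -oo)%E by apply: ereal_inf_lbound.
    by rewrite qz.
apply/eqP; rewrite eq_le; apply/andP; split.
- apply/ler_addgt0Pr => e e0.
  have eM : 0 < e / M by apply: divr_gt0.
  have tz : z - e / M < z by rewrite ltrBlDr ltrDl.
  have h1 := lb _ tz; have h2 := Flip _ _ (ltW tz).
  have h3 : M * (z - (z - e / M)) = e by field; rewrite gt_eqF.
  lra.
- apply/ler_addgt0Pr => e e0.
  have [t [tz ut]] := ex (e / M) (divr_gt0 e0 M0).
  case: (leP t z) => tz'.
    by apply: le_trans ut _; rewrite ler_wpDr ?(ltW e0) // Fle.
  have := Flip z t (ltW tz').
  have : M * (t - z) <= e.
    rewrite -ler_pdivlMl //; rewrite mulrC; lra.
  lra.
Qed.

Lemma Q2 z : 0 < p z -> quantile p (distF p z) = z%:E.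
Proof.
move=> pz; apply/le_anti/andP; split.
  by apply: ereal_inf_lbound => /=.
apply: le_ereal_inf_tmp => -[t| |] //= Ht.
- rewrite lee_fin leNgt; apply/negP => tz.
  by have := Fsinc_l pz tz; rewrite ltNge Ht.
- by rewrite leey.
- by have := F_pos pz; rewrite ltNge Ht.
Qed.

Lemma J_case u : J0 p u = 0 \/ exists z, distF p z = u /\ J0 p u = p z.
Proof.
rewrite /J0; case E : (quantile p u) => [z| |] /=; [right|left|left] => //.
by exists z; split => //; exact: Q1.
Qed.

Lemma J_ge0 u : 0 <= J0 p u.
Proof. by case: (J_case u) => [->|[z [_ ->]]]. Qed.

Lemma J_F z : 0 < p z -> J0 p (distF p z) = p z.
Proof. by move=> pz; rewrite /J0 Q2. Qed.

Lemma conc_aff (a b : R) : concave_on01 (fun u => a + b * u).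
Proof. by move=> x y t _ _ _; rewrite le_eqVlt; apply/orP; left; apply/eqP; ring. Qed.

Lemma J_le_M : exists2 M, 0 < M & forall u, J0 p u <= M.
Proof.
have [M [M0 pM _]] := Mbound; exists M => // u.
by case: (J_case u) => [->|[z [_ ->]]] //; exact: ltW.
Qed.

Lemma G_fin u : 0 <= u <= 1 ->
  (Jhat p u)%:E = lcm01 (J0 p) u /\ J0 p u <= Jhat p u.
Proof.
move=> u01; have [M M0 JM] := J_le_M.
have lo : ((J0 p u)%:E <= lcm01 (J0 p) u)%E.
  by apply: le_ereal_inf_tmp => _ [g [cg Jg] <-]; rewrite lee_fin; apply: Jg.
have hi : (lcm01 (J0 p) u <= M%:E)%E.
  apply: ereal_inf_lbound; exists (fun v => M + 0 * v) => //=; last by rewrite mul0r addr0.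
  by split; [exact: conc_aff|move=> v _; rewrite mul0r addr0].
move: lo hi; rewrite /Jhat; case: (lcm01 (J0 p) u) => [r| |] //= lo hi.
Qed.

Lemma G_le (g : R -> R) u : concave_on01 g -> (forall v, 0 <= v <= 1 -> J0 p v <= g v) ->
  0 <= u <= 1 -> Jhat p u <= g u.
Proof.
move=> cg Jg u01; have [h _] := G_fin u01; rewrite -lee_fin h.
by apply: ereal_inf_lbound; exists g.
Qed.

Lemma G_ge0 u : 0 <= u <= 1 -> 0 <= Jhat p u.
Proof. by move=> u01; have [_ h] := G_fin u01; exact: le_trans (J_ge0 u) h. Qed.

Lemma conv01 (x y t : R) : 0 <= x <= 1 -> 0 <= y <= 1 -> 0 <= t <= 1 ->
  0 <= t * x + (1 - t) * y <= 1.
Proof.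
move=> /andP[x0 x1] /andP[y0 y1] /andP[t0 t1].
have h1 : 0 <= t * x by apply: mulr_ge0.
have h2 : 0 <= (1 - t) * y by apply: mulr_ge0; lra.
have h3 : t * x <= t by rewrite -{2}(mulr1 t); apply: ler_wpM2l.
have h4 : (1 - t) * y <= 1 - t by rewrite -{2}(mulr1 (1 - t)); apply: ler_wpM2l; lra.
apply/andP; split; lra.
Qed.

Lemma G_conc : concave_on01 (Jhat p).
Proof.
move=> x y t x01 y01 t01.
have m01 := conv01 x01 y01 t01.
have [hm _] := G_fin m01; rewrite -lee_fin hm.
apply: le_ereal_inf_tmp => _ [g [cg Jg] <-]; rewrite lee_fin.
apply: le_trans (cg _ _ _ x01 y01 t01).
move: t01 => /andP[t0 t1].
apply: lerD; apply: ler_wpM2l; rewrite ?subr_ge0 //; exact: G_le.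
Qed.

Lemma slope3 (g : R -> R) a b c : concave_on01 g -> 0 <= a -> a < b -> b < c -> c <= 1 ->
  (c - b) * g a + (b - a) * g c <= (c - a) * g b.
Proof.
move=> cg a0 ab bc c1.
have ca : 0 < c - a by lra.
pose t := (c - b) / (c - a).
have t0 : 0 <= t by apply: divr_ge0; lra.
have t1 : t <= 1 by rewrite ler_pdivrMr // mul1r; lra.
have tb : t * a + (1 - t) * c = b by rewrite /t; field; rewrite gt_eqF.
have := cg a c t _ _ _; rewrite tb => h.
have e1 : (c - a) * (t * g a + (1 - t) * g c) = (c - b) * g a + (b - a) * g c.
  by rewrite /t; field; rewrite gt_eqF.
rewrite -e1; apply: ler_wpM2l; [lra|apply: h].
- apply/andP; split; lra.
- apply/andP; split; lra.
- by apply/andP; split.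
Qed.

Lemma divle (X Y P Q : R) : 0 < P -> 0 < Q -> X * Q <= Y * P -> X / P <= Y / Q.
Proof. by move=> P0 Q0 h; rewrite ler_pdivrMr // mulrAC ler_pdivlMr. Qed.

Lemma Qmono (g : R -> R) v h1 h2 : concave_on01 g -> 0 <= v -> 0 < h1 -> h1 <= h2 ->
  v + h2 <= 1 -> (g (v + h2) - g v) / h2 <= (g (v + h1) - g v) / h1.
Proof.
move=> cg v0 h10 h12 vh2; have [->//|ne] := eqVneq h1 h2.
have lt12 : h1 < h2 by rewrite lt_neqAle ne h12.
apply: divle => //; first lra.
have := slope3 cg v0 (_ : v < v + h1) (_ : v + h1 < v + h2) vh2.
have e : (g (v + h1) - g v) * h2 - (g (v + h2) - g v) * h1 =
  (v + h2 - v) * g (v + h1) - ((v + h2 - (v + h1)) * g v + (v + h1 - v) * g (v + h2)).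
  by ring.
move=> h; rewrite -subr_ge0 e subr_ge0; apply: h; lra.
Qed.

Lemma Qchord (g : R -> R) u v h : concave_on01 g -> 0 <= u -> u < v -> 0 < h ->
  v + h <= 1 -> (g (v + h) - g v) / h <= (g v - g u) / (v - u).
Proof.
move=> cg u0 uv h0 vh.
apply: divle => //; first lra.
have := slope3 cg u0 uv (_ : v < v + h) vh.
have := slope3 cg u0 (_ : u < v) (_ : v < v + h) vh.
move=> _ h1; have h2 := h1 _; clear h1.
have e : (g v - g u) * h - (g (v + h) - g v) * (v - u) =
  (v + h - u) * g v - ((v + h - v) * g u + (v - u) * g (v + h)).
  by ring.
rewrite -subr_ge0 e subr_ge0; apply: h2; lra.
Qed.

Local Notation G := (Jhat p).
Local Notation D := (rderiv (Jhat p)).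

Lemma Dcvg v : 0 <= v < 1 ->
  cvg (((G (v + h) - G v) / h)%:E @[h --> 0^'+]).
Proof.
move=> /andP[v0 v1]; apply: nonincreasing_at_right_is_cvge.
near=> x => n m; rewrite !in_itv /= => /andP[n0 nx] /andP[m0 mx] nm.
rewrite lee_fin; apply: Qmono => //; first exact: G_conc.
have : x < 1 - v by near: x; apply: nbhs_right_lt; lra.
lra.
Unshelve. all: by end_near. Qed.

Lemma Dup v d X : 0 <= v < 1 -> 0 < d ->
  (forall h, 0 < h < d -> (G (v + h) - G v) / h <= X) -> (D v <= X%:E)%E.
Proof.
move=> v01 d0 H; apply: lime_le; first exact: Dcvg.
near=> h; rewrite lee_fin; apply: H; apply/andP; split.
- by near: h; exact: nbhs_right_gt.
- by near: h; exact: nbhs_right_lt.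
Unshelve. all: by end_near. Qed.

Lemma Dlow v h : 0 <= v -> 0 < h -> v + h <= 1 ->
  (((G (v + h) - G v) / h)%:E <= D v)%E.
Proof.
move=> v0 h0 vh; apply: lime_ge; first by apply: Dcvg; apply/andP; split => //; lra.
near=> h'; rewrite lee_fin; apply: (Qmono G_conc v0 _ _ vh).
- by near: h'; exact: nbhs_right_gt.
- by apply/ltW; near: h'; exact: nbhs_right_lt.
Unshelve. all: by end_near. Qed.

Lemma Dnoninc u v : 0 <= u -> u < v -> v < 1 -> (D v <= D u)%E.
Proof.
move=> u0 uv v1.
apply: (@le_trans _ _ ((G v - G u) / (v - u))%:E).
  apply: (@Dup v (1 - v)); [apply/andP; split; lra|lra|].
  move=> h /andP[h0 h1]; apply: Qchord => //; [exact: G_conc|lra].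
have := @Dlow u (v - u) u0 _ _; rewrite (addrC u) subrK; apply; lra.
Qed.

Local Notation D1 := (lim (D v @[v --> 1^'-])).

Lemma D1cvg : cvg (D v @[v --> 1^'-]).
Proof.
have : cvg ((D \o -%R) x @[x --> (-1)^'+]).
  apply: nondecreasing_at_right_is_cvge.
  near=> x => n m; rewrite !in_itv /= => /andP[n1 nx] /andP[m1 mx] nm.
  have x0 : x < 0 by near: x; apply: nbhs_right_lt; lra.
  have [->//|ne] := eqVneq n m.
  apply: Dnoninc; lra.
move=> /cvg_ex[l hl]; apply/cvg_ex; exists l; apply/cvg_at_leftNP; exact: hl.
Unshelve. all: by end_near. Qed.

Lemma D1le w : 0 <= w < 1 -> (D1 <= D w)%E.
Proof.
move=> /andP[w0 w1]; apply: lime_le; first exact: D1cvg.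
near=> v; apply: Dnoninc => //.
Unshelve. all: by end_near. Qed.

Local Notation psi := (psi_star p).

Lemma psiE z : psi z = if distF p z < 1 then D (distF p z) else D1.
Proof. by []. Qed.

Lemma psi_noninc x y : x <= y -> (psi y <= psi x)%E.
Proof.
move=> xy; rewrite !psiE; have Fxy := Fle xy.
have F0 := F_ge0 x.
have [hy|hy] := boolP (distF p y < 1).
  have hx : distF p x < 1 by exact: le_lt_trans Fxy hy.
  rewrite hx; have [->//|ne] := eqVneq (distF p x) (distF p y).
  by apply: Dnoninc => //; rewrite lt_neqAle ne Fxy.
have [hx|hx] := boolP (distF p x < 1).
  by apply: D1le; rewrite F0 hx.
by [].
Qed.

Lemma psi_cvgNy : cvg (psi z @[z --> -oo]).
Proof.
apply/cvg_ex; eexists; apply/cvgNy_compNP; apply: nondecreasing_cvge.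
by move=> a b ab /=; apply: psi_noninc; rewrite lerN2.
Qed.

Lemma psi_cvgy : cvg (psi z @[z --> +oo]).
Proof.
apply/cvg_ex; eexists; apply: nonincreasing_cvge.
by move=> a b ab; apply: psi_noninc.
Qed.

Lemma psi_le_limNy z : (psi z <= lim (psi x @[x --> -oo%R]))%E.
Proof.
apply: lime_ge; first exact: psi_cvgNy.
near=> x; apply: psi_noninc; apply/ltW.
by near: x; apply: nbhs_ninfty_lt; exact: num_real.
Unshelve. all: by end_near. Qed.

Lemma limy_le_psi z : (lim (psi x @[x --> +oo%R]) <= psi z)%E.
Proof.
apply: lime_le; first exact: psi_cvgy.
near=> x; apply: psi_noninc; apply/ltW.
by near: x; apply: nbhs_pinfty_gt; exact: num_real.
Unshelve. all: by end_near. Qed.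

Lemma p_cases x : p x = 0 \/ 0 < p x.
Proof. by have := p_ge0 x; rewrite le_eqVlt => /orP[/eqP <-|]; [left|right]. Qed.

Lemma haz_lo x C : 0 <= C -> distF p x <= 1 / 2 -> hazard p x <= C ->
  p x <= C * distF p x.
Proof.
move=> C0 Fx; case: (p_cases x) => [->|px]; first by rewrite mulr_ge0 // F_ge0.
have F0 := F_pos px.
rewrite /hazard min_l; last lra.
by rewrite ler_pdivrMr.
Qed.

Lemma haz_hi x C : 0 <= C -> 1 / 2 <= distF p x -> hazard p x <= C ->
  p x <= C * (1 - distF p x).
Proof.
move=> C0 Fx; case: (p_cases x) => [->|px].
  by rewrite mulr_ge0 // subr_ge0 F_le1.
have F1 := F_lt1 px.
rewrite /hazard min_r; last lra.
by rewrite ler_pdivrMr // subr_gt0.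
Qed.

Lemma haz_of_lo x C : 0 <= C -> distF p x <= 1 / 2 ->
  (0 < p x -> p x <= C * distF p x) -> hazard p x <= C.
Proof.
move=> C0 Fx H; case: (p_cases x) => [px|px]; first by rewrite /hazard px mul0r.
have F0 := F_pos px.
rewrite /hazard min_l; last lra.
by rewrite ler_pdivrMr // H.
Qed.

Lemma haz_of_hi x C : 0 <= C -> 1 / 2 <= distF p x ->
  (0 < p x -> p x <= C * (1 - distF p x)) -> hazard p x <= C.
Proof.
move=> C0 Fx H; case: (p_cases x) => [px|px]; first by rewrite /hazard px mul0r.
have F1 := F_lt1 px.
rewrite /hazard min_r; last lra.
by rewrite ler_pdivrMr ?subr_gt0 // H.
Qed.

Lemma exists_pos : exists x, 0 < p x.
Proof.
have [//|H] := pselect (exists x, 0 < p x).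
have Hle x : p x <= 0 by rewrite leNgt; apply/negP => px; apply: H; exists x.
have h2 : 0 < 1 / 2 :> R by lra.
have [z0 h0] := tail_lo h2.
have [z1 h1] : exists z, 1 / 2 < distF p z.
  have [z hz] := tail_hi h2.
  by exists z; lra.
case: (leP z0 z1) => z01.
  have := Fub z01 (fun x _ => Hle x); rewrite mul0r; lra.
have := Fle (ltW z01); lra.
Qed.

Lemma F_zero y : (forall x, x <= y -> p x <= 0) -> distF p y = 0.
Proof.
move=> H; apply/eqP; rewrite eq_le F_ge0 andbT; apply/ler_addgt0Pr => e e0.
have [z hz] := tail_lo e0; rewrite add0r.
case: (leP y z) => yz; first by have := Fle yz; lra.
have h : forall x, z < x <= y -> p x <= 0 by move=> x /andP[_ xy]; exact: H.
have := Fub (ltW yz) h; rewrite mul0r; lra.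
Qed.

Lemma F_zero_at r : (forall x, 0 < p x -> r <= x) -> distF p r = 0.
Proof.
move=> H; have [M [M0 pM Flip]] := Mbound.
apply/eqP; rewrite eq_le F_ge0 andbT; apply/ler_addgt0Pr => e e0; rewrite add0r.
have eM : 0 < e / M by apply: divr_gt0.
have hy : distF p (r - e / M) = 0.
  apply: F_zero => x xr; rewrite leNgt; apply/negP => /H; lra.
have hr : r - e / M <= r by lra.
have := Flip (r - e / M) r hr.
have -> : M * (r - (r - e / M)) = e by field; rewrite gt_eqF.
rewrite hy; lra.
Qed.

Lemma F_one_at r : (forall x, 0 < p x -> x <= r) -> distF p r = 1.
Proof.
move=> H; apply/eqP; rewrite eq_le F_le1 /=; apply/ler_addgt0Pr => e e0.
have [z hz] := tail_hi e0.
case: (leP z r) => zr; first by have := Fle zr; lra.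
have h : forall x, r < x <= z -> p x <= 0.
  move=> x /andP[rx _]; rewrite leNgt; apply/negP => /H; lra.
have := Fub (ltW zr) h; rewrite mul0r; lra.
Qed.

Lemma zmin_lb x : 0 < p x -> (zmin p <= x%:E)%E.
Proof. by move=> px; apply: ereal_inf_lbound; exists x. Qed.

Lemma zmax_ub x : 0 < p x -> (x%:E <= zmax p)%E.
Proof. by move=> px; apply: ereal_sup_ubound; exists x. Qed.

Lemma zmin_ney : zmin p <> +oo%E.
Proof.
have [x px] := exists_pos; move=> h; have := zmin_lb px; by rewrite h.
Qed.

Lemma zmax_neNy : zmax p <> -oo%E.
Proof.
have [x px] := exists_pos; move=> h; have := zmax_ub px; by rewrite h.
Qed.

Lemma zmin_r r : zmin p = r%:E -> (forall x, 0 < p x -> r <= x) /\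
  (forall e, 0 < e -> exists x, 0 < p x /\ x < r + e).
Proof.
move=> h; split.
  by move=> x /zmin_lb; rewrite h lee_fin.
move=> e e0; have : (zmin p < (r + e)%:E)%E by rewrite h lte_fin ltrDl.
by move=> /ereal_inf_lt[_ [x px <-]]; rewrite lte_fin => xr; exists x.
Qed.

Lemma zmax_r r : zmax p = r%:E -> (forall x, 0 < p x -> x <= r) /\
  (forall e, 0 < e -> exists x, 0 < p x /\ r - e < x).
Proof.
move=> h; split.
  by move=> x /zmax_ub; rewrite h lee_fin.
move=> e e0; have : ((r - e)%:E < zmax p)%E by rewrite h lte_fin ltrBlDr ltrDl.
by move=> /ereal_sup_gt[_ [x px <-]]; rewrite lte_fin => xr; exists x.
Qed.

Lemma zmin_Ny : zmin p = -oo%E -> forall z, exists x, 0 < p x /\ x < z.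
Proof.
move=> h z; have : (zmin p < z%:E)%E by rewrite h ltNyr.
by move=> /ereal_inf_lt[_ [x px <-]]; rewrite lte_fin => xr; exists x.
Qed.

Lemma zmax_y : zmax p = +oo%E -> forall z, exists x, 0 < p x /\ z < x.
Proof.
move=> h z; have : (z%:E < zmax p)%E by rewrite h ltry.
by move=> /ereal_sup_gt[_ [x px <-]]; rewrite lte_fin => xr; exists x.
Qed.

Lemma Za : (limf_esup (fun z => (hazard p z)%:E) (from_right (zmin p)) < +oo)%E ->
  zmin p = -oo%E.
Proof.
move=> /esup_lt [V [FV [C [C0 HC]]]].
case E: (zmin p) => [r| |] //; last by have := zmin_ney; rewrite E.
exfalso; rewrite E /= in FV.
have [Hr Hr2] := zmin_r E.
have Fr0 := F_zero_at Hr.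
have [M [M0 pM Flip]] := Mbound.
have [e e0 He] := at_right_ex FV.
have K0 : 0 < M + C + 1 by lra.
have [d [d0 de Kd]] := d_choice e0 K0.
have Md : M * d <= 1 / 2 by apply: (Kd_le (ltW d0) _ Kd); lra.
have Cd : C * d <= 1 / 2 by apply: (Kd_le (ltW d0) _ Kd); lra.
have Fz0 : forall z, r < z < r + d -> distF p z = 0.
  move=> z /andP[rz zrd].
  have hx : forall x, r < x <= z -> p x <= C * distF p z.
    move=> x /andP[rx xz].
    have Fx : distF p x <= 1 / 2.
      have := Flip r x (ltW rx); rewrite Fr0 subr0 => h.
      have : M * (x - r) <= 1 / 2 by apply: (mul_le_half (ltW M0) _ Md); lra.
      lra.
    have Vx : V x by apply: He; apply/andP; split; lra.
    have := haz_lo C0 Fx (HC x Vx) => h; apply: le_trans h _.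
    by apply: ler_wpM2l => //; exact: Fle.
  have := Fub (ltW rz) hx; rewrite Fr0 subr0 => h2.
  have h3 : C * (z - r) <= 1 / 2 by apply: (mul_le_half C0 _ Cd); lra.
  have h4 : distF p z * (C * (z - r)) <= distF p z * (1 / 2).
    by apply: ler_wpM2l => //; exact: F_ge0.
  have e4 : C * distF p z * (z - r) = distF p z * (C * (z - r)) by ring.
  have := F_ge0 z; lra.
have d2 : 0 < d / 2 by lra.
have [x [px xrd]] := Hr2 _ d2.
have rx := Hr x px.
have xx : x < x + d / 4 by lra.
have := Fsinc_r px xx; rewrite (Fz0 (x + d / 4)); last by apply/andP; split; lra.
have := F_ge0 x; lra.
Qed.

Lemma Zb : (limf_esup (fun z => (hazard p z)%:E) (from_left (zmax p)) < +oo)%E ->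
  zmax p = +oo%E.
Proof.
move=> /esup_lt [V [FV [C [C0 HC]]]].
case E: (zmax p) => [r| |] //; last by have := zmax_neNy; rewrite E.
exfalso; rewrite E /= in FV.
have [Hr Hr2] := zmax_r E.
have Fr1 := F_one_at Hr.
have [M [M0 pM Flip]] := Mbound.
have [e e0 He] := at_left_ex FV.
have pr0 : p r <= 0.
  rewrite leNgt; apply/negP => pr; have [d' d0' Hd] := pos_near pr.
  have : 0 < p (r + d' / 2).
    apply: lt_trans (Hd _ _); first lra.
    rewrite opprD addrA subrr add0r normrN ger0_norm; lra.
  by move/Hr; lra.
have K0 : 0 < M + C + 1 by lra.
have [d [d0 de Kd]] := d_choice e0 K0.
have Md : M * d <= 1 / 2 by apply: (Kd_le (ltW d0) _ Kd); lra.
have Cd : C * d <= 1 / 2 by apply: (Kd_le (ltW d0) _ Kd); lra.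
have Fz1 : forall z, r - d < z < r -> distF p z = 1.
  move=> z /andP[zr rz].
  have F1z : 0 <= 1 - distF p z by have := F_le1 z; lra.
  have hx : forall x, z < x <= r -> p x <= C * (1 - distF p z).
    move=> x /andP[zx xr]; have [->|xne] := eqVneq x r.
      by apply: le_trans pr0 _; apply: mulr_ge0.
    have xr' : x < r by rewrite lt_neqAle xne xr.
    have Fx : 1 / 2 <= distF p x.
      have := Flip x r (ltW xr'); rewrite Fr1 => h.
      have : M * (r - x) <= 1 / 2 by apply: (mul_le_half (ltW M0) _ Md); lra.
      lra.
    have Vx : V x by apply: He; apply/andP; split; lra.
    have := haz_hi C0 Fx (HC x Vx) => h; apply: le_trans h _.
    apply: ler_wpM2l => //; have := Fle (ltW zx); lra.
  have := Fub (ltW rz) hx; rewrite Fr1 => h2.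
  have h3 : C * (r - z) <= 1 / 2 by apply: (mul_le_half C0 _ Cd); lra.
  have h4 : (1 - distF p z) * (C * (r - z)) <= (1 - distF p z) * (1 / 2).
    by apply: ler_wpM2l.
  have e4 : C * (1 - distF p z) * (r - z) = (1 - distF p z) * (C * (r - z)) by ring.
  apply/eqP; rewrite eq_le F_le1 /=; lra.
have d2 : 0 < d / 2 by lra.
have [x [px xrd]] := Hr2 _ d2.
have rx := Hr x px.
have xx : x - d / 4 < x by lra.
have := Fsinc_l px xx; rewrite (Fz1 (x - d / 4)); last by apply/andP; split; lra.
have := F_le1 x; lra.
Qed.

Lemma a2 : (limf_esup (fun z => (hazard p z)%:E) (from_right (zmin p)) < +oo)%E ->
  (lim (psi z @[z --> -oo%R]) < +oo)%E.
Proof.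
move=> H; have Z := Za H.
move: H => /esup_lt [V [FV [C [C0 HC]]]]; rewrite Z /= in FV.
have [z0 Hz0] := ninfty_ex FV.
have h2 : 0 < 1 / 2 :> R by lra.
have [z1 Fz1] := tail_lo h2.
have [z2 [z20 z21]] : exists z2, z2 < z0 /\ z2 <= z1.
  by case: (ltP z1 z0) => h; [exists z1 | exists (z0 - 1)]; split; lra.
have [x [px xz2]] := zmin_Ny Z z2.
have u0p : 0 < distF p z2 by apply: lt_le_trans (F_pos px) (Fle (ltW xz2)).
have u0h : distF p z2 <= 1 / 2 by have := Fle z21; lra.
have [M [M0 pM Flip]] := Mbound.
set u0 := distF p z2 in u0p u0h.
have plo : forall y, y <= z2 -> p y <= C * distF p y.
  move=> y yz2; apply: haz_lo => //; first by have := Fle yz2; rewrite -/u0; lra.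
  apply: HC; apply: Hz0; lra.
set K := C + M / u0.
have Mu0 : 0 <= M / u0 by apply: divr_ge0; lra.
have K0 : 0 <= K by rewrite /K; apply: addr_ge0.
have JK : forall u, 0 <= u <= 1 -> J0 p u <= 0 + K * u.
  move=> u /andP[u0' u1]; rewrite add0r; case: (J_case u) => [->|[z [Fz ->]]].
    exact: mulr_ge0.
  case: (leP z z2) => zz2.
    apply: le_trans (plo z zz2) _; rewrite Fz; apply: ler_wpM2r => //.
    by rewrite /K lerDl.
  have uu0 : u0 <= u by rewrite -Fz; apply: Fle; exact: ltW.
  apply: le_trans (pM z) _.
  have : M <= M / u0 * u.
    rewrite mulrAC ler_pdivlMr //; apply: ler_wpM2l; lra.
  move=> h; apply: le_trans h _; apply: ler_wpM2r => //; by rewrite /K lerDr.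
have GK : forall u, 0 <= u <= 1 -> Jhat p u <= K * u.
  by move=> u u01; have := G_le (conc_aff 0 K) JK u01; rewrite add0r.
have i0 : 0 <= (0:R) <= 1 by apply/andP; split; lra.
have G00 : Jhat p 0 = 0.
  apply/eqP; rewrite eq_le (G_ge0 i0) andbT.
  by have := GK 0 i0; rewrite mulr0.
have DK : forall v, 0 <= v < 1 -> (D v <= K%:E)%E.
  move=> v /andP[v0 v1]; apply: (@Dup v (1 - v)); [by apply/andP; split|lra|].
  move=> h /andP[h0 h1].
  have Gvh : Jhat p (v + h) <= K * (v + h) by apply: GK; apply/andP; split; lra.
  have [v00|vn0] := eqVneq v 0.
    move: Gvh; rewrite v00 !add0r G00 subr0 ler_pdivrMr //; exact.
  have vp : 0 < v by rewrite lt_neqAle eq_sym vn0 v0.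
  apply: le_trans (Qchord G_conc (lexx 0) vp h0 _) _; first lra.
  rewrite G00 !subr0 ler_pdivrMr //; apply: GK; apply/andP; split; lra.
have psiK : forall z, z <= z2 -> (psi z <= K%:E)%E.
  move=> z zz2; rewrite psiE; have Fz := Fle zz2.
  have F1 : distF p z < 1 by rewrite -/u0 in Fz; lra.
  by rewrite F1; apply: DK; rewrite F_ge0 F1.
apply: (@le_lt_trans _ _ K%:E); last exact: ltry.
apply: lime_le; first exact: psi_cvgNy.
near=> z; apply: psiK; apply/ltW; near: z; apply: nbhs_ninfty_lt; exact: num_real.
Unshelve. all: by end_near. Qed.

Lemma a1 : (lim (psi z @[z --> -oo%R]) < +oo)%E ->
  (limf_esup (fun z => (hazard p z)%:E) (from_right (zmin p)) < +oo)%E.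
Proof.
move=> hL.
have [C [C0 hC]] : exists C, 0 <= C /\ (lim (psi z @[z --> -oo%R]) <= C%:E)%E.
  move: hL; case: (lim _) => [r| |] // _.
  + exists (Num.max r 0); split; first by rewrite le_max lexx orbT.
    by rewrite lee_fin le_max lexx.
  + by exists 0; split => //; rewrite leNye.
have psiC z : (psi z <= C%:E)%E := le_trans (psi_le_limNy z) hC.
have [M [M0 pM Flip]] := Mbound.
have GC : forall u, 0 < u <= 1 -> Jhat p u <= C * u.
  move=> u /andP[u0 u1]; apply/ler_addgt0Pr => e e0.
  have e2 : 0 < e / 2 by lra.
  have [dl dl0 [Hs _]] := small e2.
  have Mdl : 0 <= M / dl by apply: divr_ge0; lra.
  have Jg : forall v, 0 <= v <= 1 -> J0 p v <= e / 2 + M / dl * v.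
    move=> v /andP[v0 v1]; case: (J_case v) => [->|[z [Fz ->]]].
      by apply: addr_ge0; [lra| exact: mulr_ge0].
    case: (ltP v dl) => vdl.
      apply: le_trans (Hs z _) _; first by rewrite Fz.
      by rewrite lerDl; exact: mulr_ge0.
    apply: le_trans (pM z) _; apply: ler_wpDl; first lra.
    rewrite mulrAC ler_pdivlMr //; apply: ler_wpM2l; lra.
  have Gw : forall w, 0 <= w <= 1 -> Jhat p w <= e / 2 + M / dl * w.
    by move=> w w01; exact: (G_le (conc_aff (e/2) (M/dl)) Jg w01).
  pose eta := Num.min (u / 2) (e * dl / (2 * M)).
  have eta0 : 0 < eta.
    rewrite lt_min; apply/andP; split; first lra.
    by apply: divr_gt0; [apply: mulr_gt0|]; lra.
  have [z Fz] := tail_lo eta0.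
  have w0 : 0 <= distF p z := F_ge0 z.
  have wu : distF p z < u / 2.
    by apply: lt_le_trans Fz _; rewrite ge_min lexx.
  have wM : M / dl * distF p z <= e / 2.
    have h : distF p z <= e * dl / (2 * M).
      by apply/ltW; apply: lt_le_trans Fz _; rewrite ge_min lexx orbT.
    apply: le_trans (ler_wpM2l Mdl h) _; rewrite le_eqVlt; apply/orP; left.
    by apply/eqP; field; rewrite !gt_eqF.
  have w1 : distF p z < 1 by lra.
  have Dw : (D (distF p z) <= C%:E)%E by have := psiC z; rewrite psiE w1.
  have uw0 : 0 < u - distF p z by lra.
  have uw1 : distF p z + (u - distF p z) <= 1 by lra.
  have := le_trans (Dlow w0 uw0 uw1) Dw.
  rewrite (addrC (distF p z)) subrK lee_fin ler_pdivrMr // => h.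
  have hw : 0 <= distF p z <= 1 by apply/andP; split; lra.
  have := Gw _ hw.
  have : C * (u - distF p z) <= C * u by apply: ler_wpM2l => //; lra.
  lra.
have Hhaz : forall x, distF p x <= 1 / 2 -> hazard p x <= C.
  move=> x Fx; apply: haz_of_lo => // px.
  have Fp := F_pos px.
  have Fx01 : 0 <= distF p x <= 1 by apply/andP; split; [exact: F_ge0|exact: F_le1].
  rewrite -{1}(J_F px); apply: le_trans (GC _ _).
    by have [_ h] := G_fin Fx01; exact: h.
  by apply/andP; split => //; exact: F_le1.
apply/esup_lt; exists [set x | distF p x <= 1 / 2]; split; last first.
  by exists C; split.
case E: (zmin p) => [r| |] /=.
- have [Hr _] := zmin_r E; have Fr0 := F_zero_at Hr.
  have i2 : 0 < 1 / (2 * M) by apply: divr_gt0; lra.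
  have Mi : M * (1 / (2 * M)) <= 1 / 2.
    by rewrite le_eqVlt; apply/orP; left; apply/eqP; field; rewrite gt_eqF.
  near=> y.
  have ry : r < y by near: y; exact: nbhs_right_gt.
  have yr : y < r + 1 / (2 * M) by near: y; apply: nbhs_right_lt; lra.
  have := Flip r y (ltW ry); rewrite Fr0 subr0 => h.
  have : M * (y - r) <= 1 / 2 by apply: (mul_le_half (ltW M0) _ Mi); lra.
  rewrite /=; lra.
- by have := zmin_ney; rewrite E.
- have h2 : 0 < 1 / 2 :> R by lra.
  have [z1 Fz1] := tail_lo h2.
  exists z1; split; first exact: num_real.
  by move=> y yz /=; have := Fle (ltW yz); lra.
Unshelve. all: by end_near. Qed.

Lemma b2 : (limf_esup (fun z => (hazard p z)%:E) (from_left (zmax p)) < +oo)%E ->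
  (-oo < lim (psi z @[z --> +oo%R]))%E.
Proof.
move=> H; have Z := Zb H.
move: H => /esup_lt [V [FV [C [C0 HC]]]]; rewrite Z /= in FV.
have [z0 Hz0] := pinfty_ex FV.
have h2 : 0 < 1 / 2 :> R by lra.
have [z1 Fz1] := tail_hi h2.
have [z2 [z20 z21]] : exists z2, z0 < z2 /\ z1 <= z2.
  by case: (ltP z0 z1) => h; [exists z1 | exists (z0 + 1)]; split; lra.
have [x [px xz2]] := zmax_y Z z2.
have u0l : distF p z2 < 1 := le_lt_trans (Fle (ltW xz2)) (F_lt1 px).
have u0h : 1 / 2 <= distF p z2 by have := Fle z21; lra.
have [M [M0 pM Flip]] := Mbound.
set u0 := distF p z2 in u0l u0h.
have phi : forall y, z2 <= y -> p y <= C * (1 - distF p y).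
  move=> y yz2; apply: haz_hi => //; first by have := Fle yz2; rewrite -/u0; lra.
  apply: HC; apply: Hz0; lra.
set K := C + M / (1 - u0).
have Mu0 : 0 <= M / (1 - u0) by apply: divr_ge0; lra.
have K0 : 0 <= K by rewrite /K; apply: addr_ge0.
have JK : forall u, 0 <= u <= 1 -> J0 p u <= K + (- K) * u.
  move=> u /andP[u0' u1].
  have -> : K + (- K) * u = K * (1 - u) by ring.
  case: (J_case u) => [->|[z [Fz ->]]].
    by apply: mulr_ge0 => //; lra.
  case: (leP z2 z) => zz2.
    apply: le_trans (phi z zz2) _; rewrite Fz; apply: ler_wpM2r; first lra.
    by rewrite /K lerDl.
  have uu0 : u <= u0 by rewrite -Fz; apply: Fle; exact: ltW.
  apply: le_trans (pM z) _.
  have : M <= M / (1 - u0) * (1 - u).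
    rewrite mulrAC ler_pdivlMr; last lra.
    apply: ler_wpM2l; lra.
  move=> h; apply: le_trans h _; apply: ler_wpM2r; first lra.
  by rewrite /K lerDr.
have GK : forall u, 0 <= u <= 1 -> Jhat p u <= K * (1 - u).
  move=> u u01; have := G_le (conc_aff K (- K)) JK u01.
  by have -> : K + (- K) * u = K * (1 - u) by ring.
have i1 : 0 <= (1:R) <= 1 by apply/andP; split; lra.
have G10 : Jhat p 1 = 0.
  apply/eqP; rewrite eq_le (G_ge0 i1) andbT.
  by have := GK 1 i1; rewrite subrr mulr0.
have DK : forall v, 0 <= v < 1 -> ((- K)%:E <= D v)%E.
  move=> v /andP[v0 v1].
  have hv : 0 < 1 - v by lra.
  have hv1 : v + (1 - v) <= 1 by lra.
  apply: le_trans (Dlow v0 hv hv1).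
  rewrite (addrC v) subrK G10 lee_fin ler_pdivlMr //.
  have : Jhat p v <= K * (1 - v) by apply: GK; apply/andP; split; lra.
  lra.
have Flt1 : forall z, distF p z < 1.
  move=> z; have [y [py zy]] := zmax_y Z z.
  exact: le_lt_trans (Fle (ltW zy)) (F_lt1 py).
have psiK : forall z, ((- K)%:E <= psi z)%E.
  by move=> z; rewrite psiE Flt1; apply: DK; rewrite F_ge0 Flt1.
apply: (@lt_le_trans _ _ (- K)%:E); first exact: ltNyr.
apply: lime_ge; first exact: psi_cvgy.
by near=> z; apply: psiK.
Unshelve. all: by end_near. Qed.

Lemma b1 : (-oo < lim (psi z @[z --> +oo%R]))%E ->
  (limf_esup (fun z => (hazard p z)%:E) (from_left (zmax p)) < +oo)%E.
Proof.
move=> hL.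
have [C [C0 hC]] : exists C, 0 <= C /\ ((- C)%:E <= lim (psi z @[z --> +oo%R]))%E.
  move: hL; case: (lim _) => [r| |] // _.
  + exists (Num.max (- r) 0); split; first by rewrite le_max lexx orbT.
    by rewrite lee_fin lerNl le_max lexx.
  + by exists 0; split => //; rewrite leey.
have psiC z : ((- C)%:E <= psi z)%E := le_trans hC (limy_le_psi z).
have [M [M0 pM Flip]] := Mbound.
have GC : forall u, 0 <= u < 1 -> Jhat p u <= C * (1 - u).
  move=> u /andP[u0 u1]; apply/ler_addgt0Pr => e e0.
  have e2 : 0 < e / 2 by lra.
  have [dl dl0 [_ Hs]] := small e2.
  have Mdl : 0 <= M / dl by apply: divr_ge0; lra.
  have Jg : forall v, 0 <= v <= 1 -> J0 p v <= (e / 2 + M / dl) + (- (M / dl)) * v.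
    move=> v /andP[v0 v1].
    have -> : e / 2 + M / dl + (- (M / dl)) * v = e / 2 + M / dl * (1 - v) by ring.
    case: (J_case v) => [->|[z [Fz ->]]].
      by apply: addr_ge0; [lra| apply: mulr_ge0 => //; lra].
    case: (ltP (1 - dl) v) => vdl.
      apply: le_trans (Hs z _) _; first by rewrite Fz.
      by rewrite lerDl; apply: mulr_ge0 => //; lra.
    apply: le_trans (pM z) _; apply: ler_wpDl; first lra.
    rewrite mulrAC ler_pdivlMr //; apply: ler_wpM2l; lra.
  have Gw : forall w, 0 <= w <= 1 -> Jhat p w <= e / 2 + M / dl * (1 - w).
    move=> w w01; have := G_le (conc_aff (e / 2 + M / dl) (- (M / dl))) Jg w01.
    by have -> : e / 2 + M / dl + (- (M / dl)) * w = e / 2 + M / dl * (1 - w) by ring.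
  pose eta := Num.min ((1 - u) / 2) (e * dl / (2 * M)).
  have eta0 : 0 < eta.
    rewrite lt_min; apply/andP; split; first lra.
    by apply: divr_gt0; [apply: mulr_gt0|]; lra.
  have eta1 : eta <= (1 - u) / 2 by rewrite ge_min lexx.
  have eta2 : eta <= e * dl / (2 * M) by rewrite ge_min lexx orbT.
  have [w [uw w1 weta Dw]] : exists w, [/\ u < w, w < 1, 1 - eta <= w &
      ((- C)%:E <= D w)%E].
    case: (pselect (exists z, ~ (distF p z < 1))) => [[z hz]|hall].
    - exists (1 - eta); split; [lra|lra|lra|].
      have := psiC z; rewrite psiE; case: ifPn => [h|_]; first by exfalso; apply: hz.
      move=> h; apply: le_trans h (D1le _); apply/andP; split; lra.
    - have [z Fz] := tail_hi eta0.
      have Fz1 : distF p z < 1.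
        by case: (boolP (distF p z < 1)) => // /negP h; exfalso; apply: hall; exists z.
      exists (distF p z); split; [lra|exact: Fz1|lra|].
      by have := psiC z; rewrite psiE Fz1.
  have w0 : 0 <= w by lra.
  have Dup' : (D w <= ((Jhat p w - Jhat p u) / (w - u))%:E)%E.
    apply: (@Dup w (1 - w)); [by apply/andP; split|lra|].
    move=> h /andP[h0 h1]; apply: Qchord => //; [exact: G_conc|lra].
  have := le_trans Dw Dup'; rewrite lee_fin ler_pdivlMr; last lra.
  have hw : 0 <= w <= 1 by apply/andP; split; lra.
  have := Gw _ hw.
  have h1w : M / dl * (1 - w) <= e / 2.
    have h : 1 - w <= e * dl / (2 * M) by lra.
    apply: le_trans (ler_wpM2l Mdl h) _; rewrite le_eqVlt; apply/orP; left.
    by apply/eqP; field; rewrite !gt_eqF.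
  have : C * (w - u) <= C * (1 - u) by apply: ler_wpM2l => //; lra.
  lra.
have Hhaz : forall x, 1 / 2 <= distF p x -> hazard p x <= C.
  move=> x Fx; apply: haz_of_hi => // px.
  have Fp := F_lt1 px.
  have Fx01 : 0 <= distF p x <= 1 by apply/andP; split; [exact: F_ge0|exact: F_le1].
  rewrite -{1}(J_F px); apply: le_trans (GC _ _).
    by have [_ h] := G_fin Fx01; exact: h.
  by apply/andP; split => //; exact: F_ge0.
apply/esup_lt; exists [set x | 1 / 2 <= distF p x]; split; last first.
  by exists C; split.
case E: (zmax p) => [r| |] /=.
- have [Hr _] := zmax_r E; have Fr1 := F_one_at Hr.
  have i2 : 0 < 1 / (2 * M) by apply: divr_gt0; lra.
  have Mi : M * (1 / (2 * M)) <= 1 / 2.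
    by rewrite le_eqVlt; apply/orP; left; apply/eqP; field; rewrite gt_eqF.
  near=> y.
  have yr : y < r by near: y; exact: nbhs_left_lt.
  have ry : r - 1 / (2 * M) < y by near: y; apply: nbhs_left_gt; lra.
  have := Flip y r (ltW yr); rewrite Fr1 => h.
  have : M * (r - y) <= 1 / 2 by apply: (mul_le_half (ltW M0) _ Mi); lra.
  rewrite /=; lra.
- have h2 : 0 < 1 / 2 :> R by lra.
  have [z1 Fz1] := tail_hi h2.
  exists z1; split; first exact: num_real.
  by move=> y yz /=; have := Fle (ltW yz); lra.
- by have := zmax_neNy; rewrite E.
Unshelve. all: by end_near. Qed.

End A.


Unset Implicit Arguments.

Theorem lemma2p5 (R : realType) (p0 : R -> R) :
  is_density p0 -> unif_cont p0 ->
  (((lim (psi_star p0 z @[z --> -oo%R]) < +oo)%E <->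
     (limf_esup (fun z => (hazard p0 z)%:E) (from_right (zmin p0)) < +oo)%E)
   /\ ((lim (psi_star p0 z @[z --> -oo%R]) < +oo)%E -> zmin p0 = -oo%E))
  /\
  (((lim (psi_star p0 z @[z --> +oo%R]) > -oo)%E <->
     (limf_esup (fun z => (hazard p0 z)%:E) (from_left (zmax p0)) < +oo)%E)
   /\ ((lim (psi_star p0 z @[z --> +oo%R]) > -oo)%E -> zmax p0 = +oo%E)).
Proof.
move=> [h0 [hm hi]] huc.
split; split.
- by split => h; [apply: a1 | apply: a2].
- by move=> h; apply: Za => //; apply: a1.
- by split => h; [apply: b1 | apply: b2].
- by move=> h; apply: Zb => //; apply: b1.
Qed.
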